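(* Let $R$ be a ring over which every pure projective right $R$-module is a direct sum of finitely presented modules. Then every pure projective $1$-tilting right $R$-module is classical.
   Context: A module is pure projective if it is a direct summand of a direct sum of finitely presented modules. A right $R$-module $T$ is $1$-tilting if $\operatorname{pd}T\le 1$, $\operatorname{Ext}^1_R(T,T^{(\lambda)})=0$ for all cardinals $\lambda$, and there is an exact sequence $0\to R\to T_0\to T_1\to 0$ with $T_0,T_1$ direct summands of direct sums of copies of $T$. $T$ is classical if $T^{\perp}=U^{\perp}$ for some finitely presented $1$-tilting module $U$, where $X^{\perp}=\{M:\operatorname{Ext}^1_R(X,M)=0\}$. *)

(* Defs.v *)
(* Right R-modules are modelled as left modules over the
   converse ring R^c: for m : M and r : R, the right action m.r is r *: m. *)
From HB Require Import structures.
From mathcomp Require Import all_boot all_order all_algebra.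
Set Implicit Arguments. Unset Strict Implicit. Unset Printing Implicit Defensive.
Import GRing.Theory.
Local Open Scope ring_scope.

Notation rmod R := (lmodType (R^c)%type).

Section Modules.
Variable R : pzRingType.

(* R regarded as a right module over itself: x . r = x * r *)
Definition RR : rmod R := ((R^c)^o)%type.

Definition hom (M N : rmod R) (f : M -> N) : Prop :=
  forall (r : R^c) (x y : M), f (r *: x + y) = r *: f x + f y.

Definition ses (A B C : rmod R) (f : A -> B) (g : B -> C) : Prop :=
  [/\ hom f, hom g, injective f, (forall c, exists b, g b = c)
    & forall b, g b = 0 <-> exists a, b = f a].

Definition Ext1_zero (T M : rmod R) : Prop :=
  forall (E : rmod R) (f : M -> E) (g : E -> T), ses f g ->
    exists s : T -> E, hom s /\ forall t, g (s t) = t.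

Definition projective (P : rmod R) : Prop :=
  forall (B C : rmod R) (g : B -> C) (h : P -> C),
    hom g -> hom h -> (forall c, exists b, g b = c) ->
    exists k : P -> B, hom k /\ forall x, g (k x) = h x.

Definition pd_le1 (T : rmod R) : Prop :=
  exists (P1 P0 : rmod R) (f : P1 -> P0) (g : P0 -> T),
    projective P1 /\ projective P0 /\ ses f g.

Definition is_dsum (I : Type) (N : I -> rmod R) (M : rmod R)
    (e : forall i, N i -> M) : Prop :=
  (forall i, hom (e i)) /\
  forall (X : rmod R) (phi : forall i, N i -> X), (forall i, hom (phi i)) ->
    (exists psi : M -> X, hom psi /\ forall i x, psi (e i x) = phi i x) /\
    (forall psi psi' : M -> X, hom psi -> hom psi' ->
       (forall i x, psi (e i x) = phi i x) ->
       (forall i x, psi' (e i x) = phi i x) -> forall m, psi m = psi' m).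

Definition summand (A M : rmod R) : Prop :=
  exists (i : A -> M) (p : M -> A), [/\ hom i, hom p & forall a, p (i a) = a].

Definition fin_free (n : nat) (F : rmod R) : Prop :=
  exists e : 'I_n -> RR -> F, @is_dsum _ (fun _ : 'I_n => RR) F e.

Definition fin_pres (M : rmod R) : Prop :=
  exists (m n : nat) (F1 F0 : rmod R) (f : F1 -> F0) (g : F0 -> M),
    [/\ fin_free m F1, fin_free n F0, hom f, hom g &
        (forall y, exists x, g x = y) /\
        (forall x, g x = 0 <-> exists z, x = f z)].

Definition pure_projective (P : rmod R) : Prop :=
  exists (I : Type) (N : I -> rmod R) (M : rmod R) (e : forall i, N i -> M),
    [/\ forall i, fin_pres (N i), @is_dsum _ N M e & summand P M].

Definition dsum_fin_pres (P : rmod R) : Prop :=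
  exists (I : Type) (N : I -> rmod R) (e : forall i, N i -> P),
    (forall i, fin_pres (N i)) /\ @is_dsum _ N P e.

Definition copies (T M : rmod R) : Prop :=
  exists (I : Type) (e : I -> T -> M), @is_dsum _ (fun _ : I => T) M e.

Definition in_Add (T X : rmod R) : Prop :=
  exists M : rmod R, copies T M /\ summand X M.

Definition tilting1 (T : rmod R) : Prop :=
  [/\ pd_le1 T,
      (forall M, copies T M -> Ext1_zero T M)
    & exists (T0 T1 : rmod R) (f : RR -> T0) (g : T0 -> T1),
        [/\ in_Add T T0, in_Add T T1 & ses f g]].

Definition classical (T : rmod R) : Prop :=
  exists U : rmod R, [/\ fin_pres U, tilting1 U &
    forall M : rmod R, Ext1_zero T M <-> Ext1_zero U M].

End Modules.

(* Main.v *)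
Require Import Defs.
From HB Require Import structures.
From mathcomp Require Import all_boot all_order all_algebra.
From Stdlib Require Import ClassicalEpsilon FunctionalExtensionality PropExtensionality ProofIrrelevance.
From Stdlib Require List.
Require Import Defs.
Set Implicit Arguments. Unset Strict Implicit. Unset Printing Implicit Defensive.
Import GRing.Theory.
Local Open Scope ring_scope.

Definition pb (P : Prop) : bool := if excluded_middle_informative P then true else false.
Lemma pbP (P : Prop) : reflect P (pb P).
Proof. rewrite /pb; case: excluded_middle_informative => h; constructor => //. Qed.

Section Sub.
Variable R : pzRingType.
Record closedP (X : rmod R) := ClosedP {
  cp :> X -> Prop;
  cp0 : cp 0;
  cpD : forall x y, cp x -> cp y -> cp (x + y);
  cpZ : forall (r : R^c) x, cp x -> cp (r *: x) }.

Variables (X : rmod R) (P : closedP X).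
Definition subT := {x : X | pb (P x)}.
HB.instance Definition _ := Choice.on subT.
Lemma sub_mem (x : subT) : P (val x). Proof. exact/pbP/(valP x). Qed.
Definition mkS (x : X) (h : P x) : subT := exist _ x (introT (pbP _) h).
Lemma cpN x : P x -> P (- x).
Proof. by move=> h; rewrite -scaleN1r; apply: cpZ. Qed.
Definition s0 : subT := mkS (cp0 P).
Definition sadd (a b : subT) : subT := mkS (cpD (sub_mem a) (sub_mem b)).
Definition sopp (a : subT) : subT := mkS (cpN (sub_mem a)).
Definition sscale (r : R^c) (a : subT) : subT := mkS (cpZ r (sub_mem a)).
Lemma saddA : associative sadd. Proof. by move=> a b c; apply: val_inj; rewrite /= addrA. Qed.
Lemma saddC : commutative sadd. Proof. by move=> a b; apply: val_inj; rewrite /= addrC. Qed.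
Lemma sadd0 : left_id s0 sadd. Proof. by move=> a; apply: val_inj; rewrite /= add0r. Qed.
Lemma saddN : left_inverse s0 sopp sadd. Proof. by move=> a; apply: val_inj; rewrite /= addNr. Qed.
HB.instance Definition _ := GRing.isZmodule.Build subT saddA saddC sadd0 saddN.
Lemma sscaleA a b v : sscale a (sscale b v) = sscale (a * b) v.
Proof. by apply: val_inj; rewrite /= scalerA. Qed.
Lemma sscale1 : left_id 1 sscale. Proof. by move=> v; apply: val_inj; rewrite /= scale1r. Qed.
Lemma sscaleDr : right_distributive sscale +%R.
Proof. by move=> a u v; apply: val_inj; rewrite /= scalerDr. Qed.
Lemma sscaleDl v : {morph sscale^~ v: a b / a + b}.
Proof. by move=> a b; apply: val_inj; rewrite /= scalerDl. Qed.
HB.instance Definition _ := GRing.Zmodule_isLmodule.Build (R^c)%type subT sscaleA sscale1 sscaleDr sscaleDl.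
Definition subM : rmod R := subT.
Lemma val_hom : hom (fun x : subM => val x). Proof. by []. Qed.
End Sub.
Arguments mkS [R X] P [x] h.

Section HomFacts.
Variable R : pzRingType.
Implicit Types M N P : rmod R.
Lemma homD M N (f : M -> N) : hom f -> forall x y, f (x + y) = f x + f y.
Proof. by move=> h x y; rewrite -[x in LHS]scale1r h scale1r. Qed.
Lemma hom0 M N (f : M -> N) : hom f -> f 0 = 0.
Proof. by move=> h; apply: (addIr (f 0)); rewrite -homD // !add0r. Qed.
Lemma homZ M N (f : M -> N) : hom f -> forall r x, f (r *: x) = r *: f x.
Proof. by move=> h r x; rewrite -[r *: x]addr0 h hom0 // addr0. Qed.
Lemma homN M N (f : M -> N) : hom f -> forall x, f (- x) = - f x.
Proof. by move=> h x; rewrite -scaleN1r homZ // scaleN1r. Qed.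
Lemma homB M N (f : M -> N) : hom f -> forall x y, f (x - y) = f x - f y.
Proof. by move=> h x y; rewrite homD // homN. Qed.
Lemma hom_sum M N (f : M -> N) I (s : seq I) (F : I -> M) : hom f ->
  f (\sum_(i <- s) F i) = \sum_(i <- s) f (F i).
Proof.
move=> h; elim: s => [|a s IH]; first by rewrite !big_nil hom0.
by rewrite !big_cons homD // IH.
Qed.
Lemma mkhom M N (f : M -> N) : (forall x y, f (x + y) = f x + f y) ->
  (forall r x, f (r *: x) = r *: f x) -> hom f.
Proof. by move=> hD hZ r x y; rewrite hD hZ. Qed.
Lemma hom_id M : hom (fun x : M => x). Proof. by []. Qed.
Lemma hom_comp M N P (f : M -> N) (g : N -> P) : hom f -> hom g -> hom (fun x => g (f x)).
Proof. by move=> hf hg r x y; rewrite hf hg. Qed.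
Lemma hom_add M N (f g : M -> N) : hom f -> hom g -> hom (fun x => f x + g x).
Proof.
move=> hf hg r x y; rewrite hf hg scalerDr.
by rewrite -!addrA; congr (_ + _); rewrite addrCA.
Qed.
Lemma hom_opp M N (f : M -> N) : hom f -> hom (fun x => - f x).
Proof. by move=> hf r x y; rewrite hf opprD scalerN. Qed.
Lemma hom_sub M N (f g : M -> N) : hom f -> hom g -> hom (fun x => f x - g x).
Proof. by move=> hf hg; apply: hom_add => //; apply: hom_opp. Qed.
Lemma hom_zero M N : hom (fun _ : M => (0 : N)).
Proof. by move=> r x y; rewrite scaler0 addr0. Qed.
Lemma hom_bigsum M N I (s : seq I) (F : I -> M -> N) : (forall i, hom (F i)) ->
  hom (fun x => \sum_(i <- s) F i x).
Proof.
move=> h; elim: s => [|a s IH].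
  by move=> r x y; rewrite !big_nil scaler0 addr0.
move=> r x y; rewrite !big_cons (h a) IH scalerDr.
by rewrite -!addrA; congr (_ + _); rewrite addrCA.
Qed.
Lemma hom_fst M N : hom (fun x : (M * N)%type => x.1). Proof. by []. Qed.
Lemma hom_snd M N : hom (fun x : (M * N)%type => x.2). Proof. by []. Qed.
Lemma hom_pair M N P (f : P -> M) (g : P -> N) : hom f -> hom g -> hom (fun x => (f x, g x)).
Proof. by move=> hf hg r x y; rewrite hf hg. Qed.
End HomFacts.

Section Quo.
Variable R : pzRingType.
Variables (X : rmod R) (S : closedP X).
Lemma cpB x y : S x -> S y -> S (x - y).
Proof. by move=> a b; apply: cpD => //; apply: cpN. Qed.
Definition canon (x : X) : X := epsilon (inhabits (0 : X)) (fun y => S (y - x)).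
Lemma canonP x : S (canon x - x).
Proof. apply: (epsilon_spec (inhabits (0:X)) (fun y => S (y - x))); exists x; rewrite subrr; exact: cp0. Qed.
Lemma canon_eq x y : S (x - y) -> canon x = canon y.
Proof.
move=> h; rewrite /canon; congr epsilon; apply: functional_extensionality => z.
apply: propositional_extensionality; split => hz.
  have -> : z - y = (z - x) + (x - y) by rewrite addrA subrK.
  exact: cpD.
have -> : z - x = (z - y) - (x - y) by rewrite opprB addrA subrK.
exact: cpB.
Qed.
Lemma canon_eqP x y : canon x = canon y -> S (x - y).
Proof.
move=> e; have h1 := canonP x; have h2 := canonP y; rewrite e in h1.
have -> : x - y = (canon y - y) - (canon y - x) by rewrite opprB [RHS]addrC addrA subrK.
exact: cpB.
Qed.
Lemma canon_idem x : canon (canon x) = canon x.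
Proof. exact/canon_eq/canonP. Qed.
Definition quoT := {x : X | canon x == x}.
HB.instance Definition _ := Choice.on quoT.
Definition qpi (x : X) : quoT := exist _ (canon x) (introT eqP (canon_idem x)).
Lemma qpi_eq x y : qpi x = qpi y <-> S (x - y).
Proof.
split; first by move=> e; apply: canon_eqP; exact: (congr1 val e).
by move=> h; apply: val_inj; rewrite /= (canon_eq h).
Qed.
Lemma qpi_val (a : quoT) : qpi (val a) = a.
Proof. by apply: val_inj => /=; apply/eqP/(valP a). Qed.
Lemma qpi_surj (a : quoT) : exists x, qpi x = a.
Proof. by exists (val a); exact: qpi_val. Qed.
Definition q0 : quoT := qpi 0.
Definition qadd (a b : quoT) : quoT := qpi (val a + val b).
Definition qopp (a : quoT) : quoT := qpi (- val a).
Definition qscale (r : R^c) (a : quoT) : quoT := qpi (r *: val a).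
Lemma qval_S x : S (val (qpi x) - x). Proof. exact: canonP. Qed.
Lemma qaddE x y : qadd (qpi x) (qpi y) = qpi (x + y).
Proof.
apply/qpi_eq; have -> : val (qpi x) + val (qpi y) - (x + y) = (val (qpi x) - x) + (val (qpi y) - y).
  by rewrite opprD addrACA.
by apply: cpD; apply: qval_S.
Qed.
Lemma qoppE x : qopp (qpi x) = qpi (- x).
Proof. apply/qpi_eq; rewrite -opprD; apply: cpN; exact: qval_S. Qed.
Lemma qscaleE r x : qscale r (qpi x) = qpi (r *: x).
Proof. apply/qpi_eq; rewrite -scalerBr; apply: cpZ; exact: qval_S. Qed.
Lemma qaddA : associative qadd.
Proof.
move=> a b c; rewrite -(qpi_val a) -(qpi_val b) -(qpi_val c).
by rewrite !qaddE addrA.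
Qed.
Lemma qaddC : commutative qadd.
Proof. by move=> a b; rewrite -(qpi_val a) -(qpi_val b) !qaddE addrC. Qed.
Lemma qadd0 : left_id q0 qadd.
Proof. by move=> a; rewrite -(qpi_val a) /q0 qaddE add0r. Qed.
Lemma qaddN : left_inverse q0 qopp qadd.
Proof. by move=> a; rewrite -(qpi_val a) qoppE qaddE addNr. Qed.
HB.instance Definition _ := GRing.isZmodule.Build quoT qaddA qaddC qadd0 qaddN.
Lemma qscaleA a b v : qscale a (qscale b v) = qscale (a * b) v.
Proof. by rewrite -(qpi_val v) !qscaleE scalerA. Qed.
Lemma qscale1 : left_id 1 qscale.
Proof. by move=> v; rewrite -(qpi_val v) qscaleE scale1r. Qed.
Lemma qscaleDr : right_distributive qscale +%R.
Proof.
move=> r u v; rewrite -(qpi_val u) -(qpi_val v).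
by rewrite [qpi _ + qpi _]qaddE !qscaleE [qpi _ + qpi _]qaddE scalerDr.
Qed.
Lemma qscaleDl v : {morph qscale^~ v: a b / a + b}.
Proof.
by move=> a b; rewrite -(qpi_val v) !qscaleE [qpi _ + qpi _]qaddE scalerDl.
Qed.
HB.instance Definition _ := GRing.Zmodule_isLmodule.Build (R^c)%type quoT qscaleA qscale1 qscaleDr qscaleDl.
Definition quoM : rmod R := quoT.
Lemma qpi_hom : hom (qpi : X -> quoM).
Proof. by move=> r x y; rewrite -[RHS]/(qadd (qscale r (qpi x)) (qpi y)) qscaleE qaddE. Qed.
Lemma qpi0 x : (qpi x : quoM) = 0 <-> S x.
Proof. by rewrite -/(q0) /q0 qpi_eq subr0. Qed.
Lemma qlift (Y : rmod R) (phi : X -> Y) : hom phi -> (forall x, S x -> phi x = 0) ->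
  exists psi : quoM -> Y, hom psi /\ forall x, psi (qpi x) = phi x.
Proof.
move=> hp hS.
have key : forall x, phi (val (qpi x)) = phi x.
  by move=> x; apply/eqP; rewrite -subr_eq0 -homB //; apply/eqP/hS/qval_S.
exists (fun a => phi (val a)); split => //.
move=> r a b; case: (qpi_surj a) => xa <-; case: (qpi_surj b) => xb <-.
by rewrite -(qpi_hom r xa xb) !key hp.
Qed.
End Quo.

Section PairFacts.
Variable R : pzRingType.
Variables (A B : rmod R).
Lemma pair_ext (z w : (A * B)%type) : z.1 = w.1 -> z.2 = w.2 -> z = w.
Proof. by case: z w => [? ?] [? ?] /= -> ->. Qed.
Lemma fstD (z w : (A * B)%type) : (z + w).1 = z.1 + w.1. Proof. by []. Qed.
Lemma sndD (z w : (A * B)%type) : (z + w).2 = z.2 + w.2. Proof. by []. Qed.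
Lemma fstZ r (z : (A * B)%type) : (r *: z).1 = r *: z.1. Proof. by []. Qed.
Lemma sndZ r (z : (A * B)%type) : (r *: z).2 = r *: z.2. Proof. by []. Qed.
Lemma fstN (z : (A * B)%type) : (- z).1 = - z.1. Proof. by []. Qed.
Lemma sndN (z : (A * B)%type) : (- z).2 = - z.2. Proof. by []. Qed.
Lemma fst0 : (0 : (A * B)%type).1 = 0. Proof. by []. Qed.
Lemma snd0 : (0 : (A * B)%type).2 = 0. Proof. by []. Qed.
Lemma fstB (z w : (A * B)%type) : (z - w).1 = z.1 - w.1. Proof. by []. Qed.
Lemma sndB (z w : (A * B)%type) : (z - w).2 = z.2 - w.2. Proof. by []. Qed.
Lemma pairD (a a' : A) (b b' : B) : ((a, b) + (a', b') : (A * B)%type) = (a + a', b + b'). Proof. by []. Qed.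
Lemma pairZ r (a : A) (b : B) : (r *: ((a, b) : (A * B)%type)) = (r *: a, r *: b). Proof. by []. Qed.
Lemma pairN (a : A) (b : B) : (- ((a, b) : (A * B)%type)) = (- a, - b). Proof. by []. Qed.
Lemma pair0 : (0 : (A * B)%type) = (0, 0). Proof. by []. Qed.
End PairFacts.
Definition pairE := (pairD, pairZ, pairN).

Lemma fchoice (A B : Type) (P : A -> B -> Prop) :
  (forall a, exists b, P a b) -> exists f : A -> B, forall a, P a (f a).
Proof.
move=> h; exists (fun a => proj1_sig (constructive_indefinite_description _ (h a))).
by move=> a; case: constructive_indefinite_description.
Qed.

Lemma dfchoice (A : Type) (B : A -> Type) (P : forall a, B a -> Prop) :
  (forall a, exists b, P a b) -> exists f : forall a, B a, forall a, P a (f a).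
Proof.
move=> h; exists (fun a => proj1_sig (constructive_indefinite_description _ (h a))).
by move=> a; case: constructive_indefinite_description.
Qed.

Lemma subsubE (V : zmodType) (a b c d : V) : a - b - (c - d) = (a - c) - (b - d).
Proof. by rewrite !opprD !opprK addrACA. Qed.

Section ExtTools.
Variable R : pzRingType.
Implicit Types M N X Y E A B C U V K Q P D W Z F T : rmod R.

Definition mkCP X (P : X -> Prop) (h0 : P 0) (hD : forall x y, P x -> P y -> P (x + y))
  (hZ : forall (r : R^c) x, P x -> P (r *: x)) : closedP X := ClosedP h0 hD hZ.

Lemma ses_inj M E X (f : M -> E) (g : E -> X) : ses f g -> injective f.
Proof. by case. Qed.

Lemma split_retract M E X (f : M -> E) (g : E -> X) (s : X -> E) :
  ses f g -> hom s -> (forall x, g (s x) = x) ->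
  exists q : E -> M, hom q /\ (forall m, q (f m) = m) /\ (forall e, f (q e) = e - s (g e)).
Proof.
move=> [hf hg fi gs ex] hs gsx.
have: forall e, exists m, f m = e - s (g e).
  move=> e; have /ex [m ->] : g (e - s (g e)) = 0 by rewrite (homB hg) gsx subrr.
  by exists m.
case/fchoice => q hq; exists q; split; last split; last by [].

  move=> r x y; apply: fi; rewrite hf !hq hg hs scalerBr.
  by rewrite opprD !addrA; congr (_ - _); rewrite addrAC.
move=> m; apply: fi; rewrite hq.
have -> : g (f m) = 0 by apply/(ex (f m)).2; exists m.
by rewrite (hom0 hs) subr0.
Qed.

Lemma pullback_lift M E X Y (f : M -> E) (g : E -> X) (phi : Y -> X) :
  ses f g -> hom phi -> Ext1_zero Y M ->
  exists s : Y -> E, hom s /\ forall y, g (s y) = phi y.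
Proof.
move=> [hf hg fi gs ex] hphi hY.
pose P : (E * Y)%type -> Prop := fun z => g z.1 = phi z.2.
have P0 : P 0 by rewrite /P /= (hom0 hg) (hom0 hphi).
have PD : forall x y, P x -> P y -> P (x + y).
  by move=> x y; rewrite /P /= => a b; rewrite (homD hg) (homD hphi) a b.
have PZ : forall (r : R^c) x, P x -> P (r *: x).
  by move=> r x; rewrite /P /= => a; rewrite (homZ hg) (homZ hphi) a.
pose CP := mkCP P0 PD PZ.
pose W := subM CP.
have Pf : forall m, P (f m, 0).
  move=> m; rewrite /P /= (hom0 hphi); apply/(ex (f m)).2; by exists m.
pose f' : M -> W := fun m => mkS CP (Pf m).
pose g' : W -> Y := fun w => (val w).2.
have hf' : hom f'.
  by move=> r x y; apply: val_inj => /=; rewrite hf pairZ pairD scaler0 addr0.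
have hg' : hom g' by [].
have sesW : ses f' g'.
  split => //.
  - by move=> x y /(congr1 val) [] /fi.
  - move=> y; have [e he] := gs (phi y).
    have pe : P (e, y) by rewrite /P /= he.
    by exists (mkS CP pe).
  - move=> w; split.
      move=> w0; have hw : g (val w).1 = phi (val w).2 := sub_mem w.
      rewrite /g' in w0; rewrite w0 (hom0 hphi) in hw; have [m hm] := (ex _).1 hw.
      by exists m; apply: val_inj; apply: pair_ext => //=.
    by case=> m ->.
have [s' [hs' gs']] := hY _ _ _ sesW.
exists (fun y => (val (s' y)).1); split.
  by move=> r x y; rewrite hs'.
move=> y; have := sub_mem (s' y); rewrite /P => ->; by rewrite -[in RHS](gs' y).
Qed.

Lemma ext_summand1 U V M : summand U V -> Ext1_zero V M -> Ext1_zero U M.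
Proof.
move=> [i [p [hi hp pi]]] hV E f g sfg.
have [s [hs gs]] := pullback_lift sfg hp hV.
exists (fun u => s (i u)); split; first exact: hom_comp.
by move=> u; rewrite gs pi.
Qed.

Lemma ext_pair1 A B M : Ext1_zero A M -> Ext1_zero B M -> Ext1_zero (A * B)%type M.
Proof.
move=> hA hB E f g sfg.
have h1 : hom (fun a : A => ((a, 0) : (A * B)%type)).
  by move=> r x y; rewrite pairZ pairD scaler0 addr0.
have h2 : hom (fun b : B => ((0, b) : (A * B)%type)).
  by move=> r x y; rewrite pairZ pairD scaler0 addr0.
have [s1 [hs1 gs1]] := pullback_lift sfg h1 hA.
have [s2 [hs2 gs2]] := pullback_lift sfg h2 hB.
have hg : hom g by case: sfg.
exists (fun z => s1 z.1 + s2 z.2); split.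
  by apply: hom_add; apply: hom_comp.
move=> [a b]; rewrite (homD hg) /= gs1 gs2.
by rewrite pairD addr0 add0r.
Qed.

Lemma ext_dsum1 I (N : I -> rmod R) C (e : forall i, N i -> C) M :
  is_dsum e -> (forall i, Ext1_zero (N i) M) -> Ext1_zero C M.
Proof.
move=> [he univ] hN E f g sfg.
have hg : hom g by case: sfg.
have H : forall i, exists s : N i -> E, hom s /\ forall y, g (s y) = e i y.
  by move=> i; apply: pullback_lift sfg (he i) (hN i).
have [s hs] := dfchoice H.
have [[psi [hpsi psie]] uniq] := univ E s (fun i => (hs i).1).
exists psi; split => //.
have [_ u2] := univ C e he.
move=> c; apply: (u2 (fun c => g (psi c)) (fun c => c)) => //.
- exact: hom_comp.
- by move=> i x; rewrite psie (hs i).2.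
Qed.

Lemma ext_summand2 X M' M : summand M' M -> Ext1_zero X M -> Ext1_zero X M'.
Proof.
move=> [i [p [hi hp pi]]] hX E' f' g' [hf' hg' fi' gs' ex'].
pose P : M -> Prop := fun m => p m = 0.
have P0 : P 0 by rewrite /P hom0.
have PD : forall x y, P x -> P y -> P (x + y) by move=> x y; rewrite /P (homD hp) => -> ->; rewrite addr0.
have PZ : forall (r : R^c) x, P x -> P (r *: x) by move=> r x; rewrite /P (homZ hp) => ->; rewrite scaler0.
pose W := subM (mkCP P0 PD PZ).
have Pw : forall m, P (m - i (p m)) by move=> m; rewrite /P (homB hp) pi subrr.
pose f : M -> (E' * W)%type := fun m => (f' (p m), mkS (mkCP P0 PD PZ) (Pw m)).
pose g : (E' * W)%type -> X := fun z => g' z.1.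
have hf : hom f.
  move=> r x y; rewrite /f pairZ pairD; congr pair; first by rewrite hp hf'.
  by apply: val_inj => /=; rewrite hp hi scalerBr addrACA opprD.
have sfg : ses f g.
  split => //.
  - by move=> r x y; rewrite /g /= hg'.
  - move=> x y e; have e1 := congr1 fst e; have e2 := congr1 (fun z => val z.2) e.
    simpl in e1, e2; move/fi': e1 => e1.
    by move: e2; rewrite e1 => /addIr.
  - by move=> x; have [e he] := gs' x; exists (e, 0).
  - move=> [e w]; rewrite /g /=; split.
      move=> /ex' [m ->]; exists (i m + val w).
      rewrite /f; congr pair; first by rewrite (homD hp) pi (sub_mem w) addr0.
      apply: val_inj => /=; rewrite (homD hp) pi (sub_mem w) addr0.
      by rewrite addrC addKr.
    by case=> m [-> _]; apply/ex'; exists (p m).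
have [s [hs gs]] := hX _ _ _ sfg.
exists (fun x => (s x).1); split; first by move=> r x y; rewrite hs.
by move=> x; have := gs x.
Qed.

Lemma pushout_ext A B C M (f : A -> B) (g : B -> C) (h : A -> M) :
  ses f g -> Ext1_zero C M -> hom h ->
  exists h' : B -> M, hom h' /\ forall a, h' (f a) = h a.
Proof.
move=> [hf hg fi gs ex] hC hh.
pose P : (M * B)%type -> Prop := fun z => exists a, z = (h a, - f a).
have P0 : P 0 by exists 0; rewrite (hom0 hh) (hom0 hf) oppr0.
have PD : forall x y, P x -> P y -> P (x + y).
  move=> x y [a ->] [b ->]; exists (a + b).
  by rewrite pairD (homD hh) (homD hf) opprD.
have PZ : forall (r : R^c) x, P x -> P (r *: x).
  by move=> r x [a ->]; exists (r *: a); rewrite pairZ (homZ hh) (homZ hf) scalerN.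
pose S := mkCP P0 PD PZ.
pose E := quoM S.
pose i : M -> E := fun m => qpi S (m, 0).
have hi : hom i.
  move=> r x y; rewrite /i -(qpi_hom S); congr qpi.
  by rewrite pairZ pairD scaler0 addr0.
have hgg : hom (fun z : (M * B)%type => g z.2) by move=> r x y; rewrite sndD sndZ hg.
have [p [hp pE]] : exists p : E -> C, hom p /\ forall z, p (qpi S z) = g z.2.
  apply: qlift => // z [a ->] /=; rewrite (homN hg).
  have : g (f a) = 0 by apply/ex; exists a.
  by move=> ->; rewrite oppr0.
have sE : ses i p.
  split => //.
  - move=> x y /qpi_eq [a] e; have e1 := congr1 fst e; have e2 := congr1 snd e.
    rewrite fstB /= in e1; rewrite sndB /= in e2.
    move: e2; rewrite subrr => /eqP; rewrite eq_sym oppr_eq0 => /eqP fa0.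
    have a0 : a = 0 by apply: fi; rewrite fa0 (hom0 hf).
    by apply/eqP; rewrite -subr_eq0 e1 a0 (hom0 hh).
  - by move=> c; have [b hb] := gs c; exists (qpi S (0, b)); rewrite pE.
  - move=> w; have [[m b] hw] := qpi_surj w; rewrite -hw pE /=; split.
      move=> /ex [a ->]; exists (m + h a); apply/qpi_eq.
      exists (- a); rewrite pairN pairD (homN hh) (homN hf) opprK oppr0 addr0.
      by rewrite opprD addrA subrr add0r.
    by case=> m' e; have := congr1 p e; rewrite /i !pE /= (hom0 hg).
have [s [hs ps]] := hC _ _ _ sE.
have [q [hq [qi _]]] := split_retract sE hs ps.
exists (fun b => q (qpi S (0, b))); split.
  apply: hom_comp hq; move=> r x y; rewrite -(qpi_hom S); congr qpi.
  by rewrite pairZ pairD scaler0 addr0.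
move=> a; have -> : qpi S (0, f a) = i (h a).
  by apply/qpi_eq; exists (- a); rewrite pairN pairD (homN hh) (homN hf) opprK oppr0 add0r addr0.
exact: qi.
Qed.

Lemma crit K Q N M (fk : K -> Q) (gk : Q -> N) :
  ses fk gk -> projective Q ->
  (forall h : K -> M, hom h -> exists h' : Q -> M, hom h' /\ forall k, h' (fk k) = h k) ->
  Ext1_zero N M.
Proof.
move=> [hfk hgk fki gks exk] pQ hext E f g [hf hg fi gs ex].
have [k [hk kgk]] := pQ _ _ g gk hg hgk gs.
have: forall x, exists m, k (fk x) = f m.
  move=> x; apply/(ex _).1; rewrite kgk; apply/exk; by exists x.
case/fchoice => h hh.
have hhom : hom h.
  by move=> r x y; apply: fi; rewrite hf -!hh hfk hk.
have [h' [hh' h'e]] := hext h hhom.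
have: forall n, exists q, gk q = n by [].
case/fchoice => sq hsq.
pose s := fun n => k (sq n) - f (h' (sq n)).
have key : forall q, s (gk q) = k q - f (h' q).
  move=> q; have /exk [x hx] : gk (sq (gk q) - q) = 0 by rewrite (homB hgk) hsq subrr.
  apply/eqP; rewrite -subr_eq0 subsubE -(homB hk) -(homB hf) -(homB hh') hx h'e -hh.
  by rewrite subrr.
exists s; split.
  move=> r x y; rewrite -(hsq x) -(hsq y) -hgk !key.
  by rewrite (hk r) hh' hf scalerBr opprD addrACA.
move=> n; rewrite -(hsq n) key (homB hg) kgk.
have -> : g (f (h' (sq n))) = 0 by apply/(ex _).2; eexists.
by rewrite subr0.
Qed.

End ExtTools.

Section Pow.
Variable R : pzRingType.
Implicit Types M N X Y E A B C U V K Q P D W Z F T : rmod R.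
Definition Pow n X : rmod R := {ffun 'I_n -> X}.
Definition dl n X (i : 'I_n) (x : X) : Pow n X := [ffun j => if j == i then x else 0].
Lemma dl_hom n X i : hom (@dl n X i).
Proof.
move=> r x y; apply/ffunP => j; rewrite !ffunE.
by case: eqP => _; rewrite ?scaler0 ?addr0.
Qed.
Lemma pow_expand n X (v : Pow n X) : v = \sum_i dl i (v i).
Proof.
apply/ffunP => j; rewrite sum_ffunE (bigD1 j) //= ffunE eqxx big1 ?addr0 //.
by move=> i /negbTE ji; rewrite ffunE eq_sym ji.
Qed.
Lemma dsum_pow n X : @is_dsum R 'I_n (fun _ => X) (Pow n X) (@dl n X).
Proof.
split; first by move=> i; apply: dl_hom.
move=> Z phi hphi; split.
  exists (fun v : Pow n X => \sum_i phi i (v i)); split.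
    move=> r x y; rewrite scaler_sumr -big_split /=; apply: eq_bigr => i _.
    by rewrite !ffunE hphi.
  move=> i x; rewrite (bigD1 i) //= ffunE eqxx big1 ?addr0 //.
  by move=> j /negbTE ji; rewrite ffunE ji hom0.
move=> p1 p2 h1 h2 e1 e2 v; rewrite (pow_expand v) !hom_sum //.
by apply: eq_bigr => i _; rewrite e1 e2.
Qed.
Lemma pow_map_hom n X Y (f : X -> Y) : hom f -> hom (fun v : Pow n X => ([ffun i => f (v i)] : Pow n Y)).
Proof. by move=> hf r x y; apply/ffunP => i; rewrite !ffunE hf. Qed.
Lemma zero_pow0 X (v : Pow 0 X) : v = 0.
Proof. by apply/ffunP => -[]. Qed.
End Pow.

Section Proj.
Variable R : pzRingType.
Implicit Types M N X Y E A B C U V K Q P D W Z F T : rmod R.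

Lemma proj_RR : projective (RR R).
Proof.
move=> B C g h hg hh gs.
have [b hb] := gs (h 1).
exists (fun x : RR R => x *: b); split.
  by move=> r x y; rewrite scalerDl scalerA.
move=> x; rewrite (homZ hg) hb -(homZ hh); congr h.
by rewrite /GRing.scale /= mulr1.
Qed.

Lemma proj_dsum I (N : I -> rmod R) P (e : forall i, N i -> P) :
  is_dsum e -> (forall i, projective (N i)) -> projective P.
Proof.
move=> [he univ] hp B C g h hg hh gs.
have H : forall i, exists k : N i -> B, hom k /\ forall x, g (k x) = h (e i x).
  by move=> i; apply: hp => //; apply: hom_comp.
have [k hk] := dfchoice H.
have [[psi [hpsi pe]] _] := univ B k (fun i => (hk i).1).
exists psi; split => //.
have [_ u] := univ C (fun i x => h (e i x)) (fun i => hom_comp (he i) hh).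
move=> x; apply: (u (fun x => g (psi x)) h) => //.
- exact: hom_comp.
- by move=> i y; rewrite pe (hk i).2.
Qed.

Lemma proj_summand U V : summand U V -> projective V -> projective U.
Proof.
move=> [i [p [hi hp pi]]] pV B C g h hg hh gs.
have [k [hk gk]] := pV B C g (fun v => h (p v)) hg (hom_comp hp hh) gs.
exists (fun u => k (i u)); split; first exact: hom_comp.
by move=> u; rewrite gk pi.
Qed.

Lemma proj_ext A B C (f : A -> B) (g : B -> C) :
  ses f g -> projective A -> projective C -> projective B.
Proof.
move=> sfg pA pC D D' b h hb hh bs.
have [hf hg fi gs ex] := sfg.
have [s [hs gs']] := pC B C g (fun x => x) hg (@hom_id _ C) gs.
have [q [hq [qf fq]]] := split_retract sfg hs gs'.
have [kA [hkA bkA]] := pA D D' b (fun a => h (f a)) hb (hom_comp hf hh) bs.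
have [kC [hkC bkC]] := pC D D' b (fun c => h (s c)) hb (hom_comp hs hh) bs.
exists (fun x => kA (q x) + kC (g x)); split.
  by apply: hom_add; apply: hom_comp.
by move=> x; rewrite (homD hb) bkA bkC -(homD hh) fq subrK.
Qed.

Lemma proj_pair A C : projective A -> projective C -> projective (A * C)%type.
Proof.
move=> pA pC; apply: (@proj_ext A _ C (fun a => (a, 0)) (fun z => z.2)) => //.
split.
- by move=> r x y; rewrite pairZ pairD scaler0 addr0.
- by [].
- by move=> x y [].
- by move=> c; exists (0, c).
- move=> [a c] /=; split; first by move=> ->; exists a.
  by case=> a' [_ ->].
Qed.

Lemma proj_fin_free n F : fin_free n F -> projective F.
Proof. by case=> e he; apply: (proj_dsum he) => _; apply: proj_RR. Qed.

Lemma proj_pow n X : projective X -> projective (Pow n X).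
Proof. by move=> pX; apply: (proj_dsum (dsum_pow n X)). Qed.

End Proj.

Section Summ.
Variable R : pzRingType.
Implicit Types M N X Y E A B C U V K Q P D W Z F T : rmod R.

Lemma summand_refl X : summand X X.
Proof. by exists (fun x => x), (fun x => x). Qed.
Lemma summand_trans A B C : summand A B -> summand B C -> summand A C.
Proof.
move=> [i [p [hi hp pi]]] [i' [p' [hi' hp' pi']]].
exists (fun a => i' (i a)), (fun c => p (p' c)); split; try exact: hom_comp.
by move=> a; rewrite pi' pi.
Qed.
Lemma summand_pair A A' B B' : summand A A' -> summand B B' -> summand (A * B)%type (A' * B')%type.
Proof.
move=> [i [p [hi hp pi]]] [i' [p' [hi' hp' pi']]].
exists (fun z => (i z.1, i' z.2)), (fun z => (p z.1, p' z.2)); split.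
- by move=> r x y; rewrite hi hi'.
- by move=> r x y; rewrite hp hp'.
- by move=> [a b] /=; rewrite pi pi'.
Qed.
Lemma summand_pow n A A' : summand A A' -> summand (Pow n A) (Pow n A').
Proof.
move=> [i [p [hi hp pi]]].
exists (fun v : Pow n A => ([ffun k => i (v k)] : Pow n A')),
       (fun v : Pow n A' => ([ffun k => p (v k)] : Pow n A)); split.
- exact: pow_map_hom.
- exact: pow_map_hom.
- by move=> v; apply/ffunP => k; rewrite !ffunE pi.
Qed.
Lemma summand_fst A B : summand A (A * B)%type.
Proof.
exists (fun a => (a, 0)), (fun z => z.1); split => //.
by move=> r x y; rewrite pairZ pairD scaler0 addr0.
Qed.
Lemma summand_snd A B : summand B (A * B)%type.
Proof.
exists (fun b => (0, b)), (fun z => z.2); split => //.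
by move=> r x y; rewrite pairZ pairD scaler0 addr0.
Qed.
End Summ.

Section Dsum.
Variable R : pzRingType.
Implicit Types M N X Y E A B C U V K Q P D W Z F T : rmod R.

Lemma dsum_unit X : @is_dsum R unit (fun _ => X) X (fun _ x => x).
Proof.
split; first by move=> _ ; apply: hom_id.
move=> Z phi hphi; split; first by exists (phi tt); split => // -[].
by move=> p1 p2 _ _ e1 e2 m; rewrite (e1 tt) (e2 tt).
Qed.

Definition pinj A B (b : bool) : (if b then A else B) -> (A * B)%type :=
  match b return (if b then A else B) -> (A * B)%type with
  | true => fun a => (a, 0) | false => fun c => (0, c) end.

Lemma dsum_pair A B : @is_dsum R bool (fun b => if b then A else B) (A * B)%type (@pinj A B).
Proof.
split.
  by case=> r x y /=; rewrite pairZ pairD scaler0 addr0.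
move=> Z phi hphi; split.
  exists (fun z => phi true z.1 + phi false z.2); split.
    by apply: hom_add; [apply: (hom_comp (@hom_fst _ A B) (hphi true)) | apply: (hom_comp (@hom_snd _ A B) (hphi false))].
  case=> x /=; rewrite (hom0 (hphi _)) ?addr0 ?add0r //.
move=> p1 p2 h1 h2 e1 e2 [a c].
have -> : ((a, c) : (A * B)%type) = @pinj A B true a + @pinj A B false c by rewrite /= pairD addr0 add0r.
by rewrite (homD h1) (homD h2) (e1 true) (e2 true) (e1 false) (e2 false).
Qed.

Lemma dsum_comp I (J : I -> Type) (N : I -> rmod R) M (e : forall i, N i -> M)
  (L : forall i, J i -> rmod R) (e' : forall i j, L i j -> N i) :
  is_dsum e -> (forall i, is_dsum (e' i)) ->
  @is_dsum R {i : I & J i} (fun p => L (projT1 p) (projT2 p)) M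
     (fun p x => e (projT1 p) (e' (projT1 p) (projT2 p) x)).
Proof.
move=> [he univ] hd; split.
  by case=> i j /=; apply: hom_comp; [case: (hd i) => h _; apply: h| apply: he].
move=> Z phi hphi.
have H : forall i, exists psi : N i -> Z, hom psi /\ forall j x, psi (e' i j x) = phi (existT _ i j) x.
  move=> i; case: (hd i) => _ u.
  by case: (u Z (fun j => phi (existT _ i j)) (fun j => hphi (existT _ i j))).
have [psi hpsi] := dfchoice H.
have [[Psi [hPsi Pe]] uniq] := univ Z psi (fun i => (hpsi i).1).
split.
  exists Psi; split => // -[i j] x /=; rewrite Pe; exact: (hpsi i).2.
move=> p1 p2 h1 h2 e1 e2.
have key : forall i x, p1 (e i x) = p2 (e i x).
  move=> i; case: (hd i) => hei u.
  have [_ ui] := u Z (fun j => phi (existT _ i j)) (fun j => hphi (existT _ i j)).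
  apply: ui; try exact: hom_comp.
  - by move=> j x; apply: (e1 (existT _ i j)).
  - by move=> j x; apply: (e2 (existT _ i j)).
have [_ ui] := univ Z (fun i x => p1 (e i x)) (fun i => hom_comp (he i) h1).
by move=> m; apply: ui => // i x; rewrite key.
Qed.

Lemma copies_pow n T C : copies T C -> copies T (Pow n C).
Proof.
case=> I [e he].
exists {i : 'I_n & I}, (fun p x => dl (projT1 p) (e (projT2 p) x)).
exact: (@dsum_comp 'I_n (fun _ => I) (fun _ => C) (Pow n C) (@dl _ n C) (fun _ _ => T) (fun _ => e) (dsum_pow n C) (fun _ => he)).
Qed.

Lemma copies_pair T A B : copies T A -> copies T B -> copies T (A * B)%type.
Proof.
case=> I [eA hA] [J [eB hB]].
pose K (b : bool) : Type := if b then I else J.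
pose e' (b : bool) : forall j : K b, T -> (if b then A else B) :=
  match b return forall j : K b, T -> (if b then A else B) with true => eA | false => eB end.
have hd : forall b, @is_dsum R (K b) (fun _ => T) (if b then A else B) (e' b) by case.
exists {b : bool & K b}, (fun p x => @pinj A B (projT1 p) (e' (projT1 p) (projT2 p) x)).
exact: (@dsum_comp bool K (fun b => if b then A else B) (A * B)%type (@pinj A B) (fun _ _ => T) e' (dsum_pair A B) hd).
Qed.

Lemma copies_unit T : copies T T.
Proof. by exists unit, (fun _ x => x); apply: dsum_unit. Qed.

Lemma in_Add_summand T X : summand X T -> in_Add T X.
Proof. by move=> h; exists T; split => //; apply: copies_unit. Qed.

Lemma dsum_proj I (N : I -> rmod R) M (e : forall i, N i -> M) (k : I) :
  is_dsum e -> exists p : M -> N k, [/\ hom p, forall x, p (e k x) = x &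
     forall j x, j <> k -> p (e j x) = 0].
Proof.
move=> [he univ].
pose phi (j : I) : N j -> N k := fun x =>
  match excluded_middle_informative (j = k) with
  | left E => eq_rect j N x k E | right _ => 0 end.
have hphi : forall j, hom (phi j).
  move=> j; rewrite /phi; case: excluded_middle_informative => [E|_].
    by case: k / E phi.
  exact: hom_zero.
have [[p [hp pe]] _] := univ _ phi hphi.
exists p; split => //.
  move=> x; rewrite pe /phi; case: excluded_middle_informative => // E.
  by rewrite (proof_irrelevance _ E erefl).
by move=> j x jk; rewrite pe /phi; case: excluded_middle_informative.
Qed.

Lemma dsum_summand I (N : I -> rmod R) M (e : forall i, N i -> M) (k : I) :
  is_dsum e -> summand (N k) M.
Proof.
move=> hd; have [p [hp pe _]] := dsum_proj k hd.
by exists (e k), p; split => //; case: hd.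
Qed.

Lemma dsum_fin I (N : I -> rmod R) M (e : forall i, N i -> M) : is_dsum e ->
  forall m, exists L : seq {i : I & N i}, m = \sum_(x <- L) e (projT1 x) (projT2 x).
Proof.
move=> [he univ].
pose S : M -> Prop := fun m => exists L : seq {i : I & N i}, m = \sum_(x <- L) e (projT1 x) (projT2 x).
have S0 : S 0 by exists [::]; rewrite big_nil.
have SD : forall x y, S x -> S y -> S (x + y).
  by move=> x y [L1 ->] [L2 ->]; exists (L1 ++ L2); rewrite big_cat.
have SZ : forall (r : R^c) x, S x -> S (r *: x).
  move=> r x [L ->]; exists [seq existT N (projT1 z) (r *: projT2 z) | z <- L].
  rewrite big_map scaler_sumr; apply: eq_bigr => z _ /=; by rewrite (homZ (he _)).
pose CS := mkCP S0 SD SZ.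
have Se : forall i x, S (e i x) by move=> i x; exists [:: existT N i x]; rewrite big_seq1.
pose phi i x : subM CS := mkS CS (Se i x).
have hphi : forall i, hom (phi i) by move=> i r x y; apply: val_inj => /=; rewrite (he i).
have [[psi [hpsi pe]] _] := univ _ phi hphi.
have [_ u] := univ M e he.
move=> m; have <- : val (psi m) = m.
  apply: (u (fun m => val (psi m)) (fun m => m)) => //.
  - exact: hom_comp.
  - by move=> i x; rewrite pe.
exact: (sub_mem (psi m)).
Qed.

End Dsum.

Section PD.
Variable R : pzRingType.
Implicit Types M N X Y E A B C U V K Q P D W Z F T : rmod R.

Lemma ses_gf A B C (f : A -> B) (g : B -> C) : ses f g -> forall a, g (f a) = 0.
Proof. by case=> _ _ _ _ ex a; apply/(ex _).2; exists a. Qed.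

Lemma kernel_summand_proj V U Q1 Q0 (fq : Q1 -> Q0) (gq : Q0 -> V) (i : U -> V) (p : V -> U) :
  ses fq gq -> projective Q1 -> projective Q0 -> hom i -> hom p -> (forall u, p (i u) = u) ->
  exists (K : rmod R) (fk : K -> Q0), projective K /\ ses fk (fun q => p (gq q)).
Proof.
move=> sq pQ1 pQ0 hi hp pi; have [hfq hgq fqi gqs exq] := sq.
have gf := ses_gf sq.
pose P1 : Q0 -> Prop := fun q => p (gq q) = 0.
have P10 : P1 0 by rewrite /P1 !hom0.
have P1D : forall x y, P1 x -> P1 y -> P1 (x + y).
  by move=> x y; rewrite /P1 (homD hgq) (homD hp) => -> ->; rewrite addr0.
have P1Z : forall (r : R^c) x, P1 x -> P1 (r *: x).
  by move=> r x; rewrite /P1 (homZ hgq) (homZ hp) => ->; rewrite scaler0.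
pose S1 := mkCP P10 P1D P1Z.
pose P2 : Q0 -> Prop := fun q => i (p (gq q)) = gq q.
have P20 : P2 0 by rewrite /P2 !hom0.
have P2D : forall x y, P2 x -> P2 y -> P2 (x + y).
  by move=> x y; rewrite /P2 (homD hgq) (homD hp) (homD hi) => -> ->.
have P2Z : forall (r : R^c) x, P2 x -> P2 (r *: x).
  by move=> r x; rewrite /P2 (homZ hgq) (homZ hp) (homZ hi) => ->.
pose S2 := mkCP P20 P2D P2Z.
pose K1 := subM S1. pose K2 := subM S2.
have p1f : forall z, P1 (fq z) by move=> z; rewrite /P1 gf hom0.
have p2f : forall z, P2 (- fq z) by move=> z; rewrite /P2 (homN hgq) gf oppr0 !hom0.
pose fq' : Q1 -> (K1 * K2)%type := fun z => (mkS S1 (p1f z), mkS S2 (p2f z)).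
pose sm : (K1 * K2)%type -> Q0 := fun z => val z.1 + val z.2.
have hsm : hom sm.
  move=> r x y; rewrite /sm /=.
  by rewrite scalerDr addrACA.
have sK : ses fq' sm.
  split => //.
  - move=> r x y; rewrite /fq' pairZ pairD; congr pair; apply: val_inj => /=.
      by rewrite hfq.
    by rewrite hfq opprD scalerN.
  - by move=> x y e; apply: fqi; have := congr1 (fun z => val z.1) e.
  - move=> q; have [q2 hq2] := gqs (i (p (gq q))).
    have h1 : P1 (q - q2) by rewrite /P1 (homB hgq) hq2 (homB hp) pi subrr.
    have h2 : P2 q2 by rewrite /P2 hq2 pi.
    by exists (mkS S1 h1, mkS S2 h2); rewrite /sm /= subrK.
  - move=> [k1 k2]; rewrite /sm /=; split.
      move=> e; have e2 : val k2 = - val k1 by rewrite -(addKr (val k1) (val k2)) e addr0.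
      have a1 : P1 (val k1) := sub_mem k1.
      have a2 : P2 (val k2) := sub_mem k2.
      have g2 : gq (val k2) = 0.
        rewrite -a2; move: a1; rewrite /P1 => a1.
        by rewrite e2 (homN hgq) (homN hp) a1 oppr0 hom0.
      have [z hz] := (exq _).1 g2.
      exists (- z); rewrite /fq'; apply: pair_ext => /=; apply: val_inj => /=.
        by rewrite (homN hfq) -hz e2 opprK.
      by rewrite (homN hfq) opprK hz.
    by case=> z; rewrite /fq' => -[-> ->] /=; rewrite subrr.
have pK : projective (K1 * K2)%type by apply: (proj_ext sK).
exists K1, (fun k => val k); split; first by apply: (proj_summand (summand_fst K1 K2)).
split => //.
- exact: hom_comp.
- by move=> x y; apply: val_inj.
- by move=> u; have [q hq] := gqs (i u); exists q; rewrite hq pi.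
- move=> q; split; first by move=> h; exists (mkS S1 h).
  by case=> k ->; apply: (sub_mem k).
Qed.

Lemma pd_summand U V : summand U V -> pd_le1 V -> pd_le1 U.
Proof.
move=> [i [p [hi hp pi]]] [Q1 [Q0 [fq [gq [pQ1 [pQ0 sq]]]]]].
have [K [fk [pK sk]]] := kernel_summand_proj sq pQ1 pQ0 hi hp pi.
by exists K, Q0, fk, (fun q => p (gq q)).
Qed.

Lemma schanuel K Q N K' Q' (f : K -> Q) (g : Q -> N) (f' : K' -> Q') (g' : Q' -> N) :
  ses f g -> ses f' g' -> projective Q -> projective Q' -> projective K' -> projective K.
Proof.
move=> sfg sfg' pQ pQ' pK'.
have [hf hg fi gs ex] := sfg; have [hf' hg' fi' gs' ex'] := sfg'.
pose P : (Q * Q')%type -> Prop := fun z => g z.1 = g' z.2.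
have P0 : P 0 by rewrite /P /= !hom0.
have PD : forall x y, P x -> P y -> P (x + y).
  by move=> x y; rewrite /P /= (homD hg) (homD hg') => -> ->.
have PZ : forall (r : R^c) x, P x -> P (r *: x).
  by move=> r x; rewrite /P /= (homZ hg) (homZ hg') => ->.
pose S := mkCP P0 PD PZ. pose X := subM S.
have Pj : forall k', P (0, f' k') by move=> k'; rewrite /P /= (ses_gf sfg') hom0.
pose j : K' -> X := fun k' => mkS S (Pj k').
have sX : ses j (fun x : X => (val x).1).
  split => //.
  - by move=> r x y; apply: val_inj => /=; rewrite pairZ pairD hf' scaler0 addr0.
  - by move=> x y /(congr1 (fun x : X => (val x).2)) /= /fi'.
  - move=> q; have [q' hq'] := gs' (g q).
    have h : P (q, q') by rewrite /P /= hq'.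
    by exists (mkS S h).
  - move=> x; split.
      move=> x0; have hx : g (val x).1 = g' (val x).2 := sub_mem x.
      rewrite x0 (hom0 hg) in hx.
      have [k' hk'] := (ex' _).1 (esym hx).
      by exists k'; apply: val_inj; apply: pair_ext => /=.
    by case=> k' ->.
have pX : projective X by apply: (proj_ext sX).
have hsnd : hom (fun x : X => (val x).2) by [].
have ssurj : forall q', exists x : X, (val x).2 = q'.
  move=> q'; have [q hq] := gs (g' q').
  have h : P (q, q') by rewrite /P /= hq.
  by exists (mkS S h).
have [s [hs ss]] := pQ' _ _ _ (fun q' => q') hsnd (@hom_id _ Q') ssurj.
have Pi : forall k, P (f k, 0) by move=> k; rewrite /P /= (ses_gf sfg) hom0.
pose inc : K -> X := fun k => mkS S (Pi k).
have: forall x : X, exists k, (val x).1 - (val (s (val x).2)).1 = f k.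
  move=> x; apply/(ex _).1.
  have hx : P (val x) := sub_mem x.
  have hsx : P (val (s (val x).2)) := sub_mem (s (val x).2).
  by rewrite (homB hg); move: hx hsx; rewrite /P => -> ->; rewrite ss subrr.
case/fchoice => r hr.
suff hKX : summand K X by exact: (proj_summand hKX pX).
exists inc, r; split.
- by move=> a x y; apply: val_inj => /=; rewrite pairZ pairD hf scaler0 addr0.
- move=> a x y; apply: fi; rewrite hf -!hr.
  have -> : (val (a *: x + y)).2 = a *: (val x).2 + (val y).2 by [].
  rewrite hs /=.
  by rewrite scalerBr opprD addrACA.
- move=> k; apply: fi; rewrite -hr /=.
  by rewrite (hom0 hs) subr0.
Qed.

Lemma pd_pair A B : pd_le1 A -> pd_le1 B -> pd_le1 (A * B)%type.
Proof.
move=> [P1 [P0 [f [g [p1 [p0 [hf hg fi gs ex]]]]]]].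
move=> [P1' [P0' [f' [g' [p1' [p0' [hf' hg' fi' gs' ex']]]]]]].
exists (P1 * P1')%type, (P0 * P0')%type, (fun z => (f z.1, f' z.2)), (fun z => (g z.1, g' z.2)).
split; first exact: proj_pair.
split; first exact: proj_pair.
split.
- by move=> r x y; rewrite hf hf'.
- by move=> r x y; rewrite hg hg'.
- by move=> [x x'] [y y'] [] /fi -> /fi' ->.
- by move=> [c c']; have [b hb] := gs c; have [b' hb'] := gs' c'; exists (b, b'); rewrite hb hb'.
- move=> [b b']; split.
    move=> e; have /= e1 := congr1 fst e; have /= e2 := congr1 snd e.
    have [a ->] := (ex _).1 e1; have [a' ->] := (ex' _).1 e2.
    by exists (a, a').
  case=> [[a a']] [-> ->]; apply: pair_ext => /=.
    by apply/(ex _).2; exists a.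
  by apply/(ex' _).2; exists a'.
Qed.

Lemma pd_zero : pd_le1 (Pow 0 (RR R)).
Proof.
have pZ : projective (Pow 0 (RR R)) by apply: proj_pow; apply: proj_RR.
exists (Pow 0 (RR R)), (Pow 0 (RR R)), (fun x => x), (fun x => x).
split => //; split => //; split => //.
- by move=> c; exists c.
- by move=> b; split => _; [exists b | apply: zero_pow0].
Qed.

Lemma pd_extR D D' (f : RR R -> D) (g : D -> D') : ses f g -> pd_le1 D -> pd_le1 D'.
Proof.
move=> sfg [Q1 [Q0 [fq [gq [p1 [p0 sq]]]]]].
have [hf hg fi gs ex] := sfg; have [hfq hgq fqi gqs exq] := sq.
pose P : Q0 -> Prop := fun q => g (gq q) = 0.
have P0 : P 0 by rewrite /P !hom0.
have PD : forall x y, P x -> P y -> P (x + y).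
  by move=> x y; rewrite /P (homD hgq) (homD hg) => -> ->; rewrite addr0.
have PZ : forall (r : R^c) x, P x -> P (r *: x).
  by move=> r x; rewrite /P (homZ hgq) (homZ hg) => ->; rewrite scaler0.
pose S := mkCP P0 PD PZ. pose K := subM S.
have Pf : forall z, P (fq z) by move=> z; rewrite /P (ses_gf sq) hom0.
pose j : Q1 -> K := fun z => mkS S (Pf z).
have: forall k : K, exists r, gq (val k) = f r.
  by move=> k; apply/(ex _).1; exact: (sub_mem k).
case/fchoice => rr hrr.
have sK : ses j rr.
  split.
  - by move=> a x y; apply: val_inj => /=; rewrite hfq.
  - by move=> a x y; apply: fi; rewrite hf -!hrr /= hgq.
  - by move=> x y /(congr1 val) /= /fqi.
  - move=> r; have [q hq] := gqs (f r).
    have h : P q by rewrite /P hq (ses_gf sfg).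
    by exists (mkS S h); apply: fi; rewrite -hrr /= hq.
  - move=> k; split.
      move=> e; have : gq (val k) = 0 by rewrite hrr e hom0.
      by case/(exq _).1 => z hz; exists z; apply: val_inj.
    by case=> z ->; apply: fi; rewrite -hrr /= (ses_gf sq) hom0.
have pK : projective K by apply: (proj_ext sK) => //; apply: proj_RR.
exists K, Q0, (fun k => val k), (fun q => g (gq q)).
split => //; split => //; split.
- by [].
- exact: hom_comp.
- by move=> x y; apply: val_inj.
- by move=> c; have [d hd] := gs c; have [q hq] := gqs d; exists q; rewrite hq.
- move=> q; split; first by move=> h; exists (mkS S h).
  by case=> k ->; exact: (sub_mem k).
Qed.

End PD.

Section FP.
Variable R : pzRingType.
Implicit Types M N X Y E A B C U V K Q P D W Z F T : rmod R.

Lemma RR_scale1 (c : RR R) : c = (c : R^c) *: (1 : RR R).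
Proof. by rewrite /GRing.scale /= mulr1. Qed.

Lemma split_l m n (i : 'I_m) : split (lshift n i) = inl i.
Proof. exact: (unsplitK (inl i : 'I_m + 'I_n)). Qed.
Lemma split_r m n (j : 'I_n) : split (rshift m j) = inr j.
Proof. exact: (unsplitK (inr j : 'I_m + 'I_n)). Qed.

Definition eFF m m' F F' (e1 : 'I_m -> RR R -> F) (e2 : 'I_m' -> RR R -> F')
  (k : 'I_(m + m')) (r : RR R) : (F * F')%type :=
  match split k with inl i => (e1 i r, 0) | inr j => (0, e2 j r) end.

Lemma fin_free_pair m m' F F' : fin_free m F -> fin_free m' F' -> fin_free (m + m') (F * F')%type.
Proof.
case=> e1 [he1 u1] [e2 [he2 u2]].
exists (eFF e1 e2); split.
  move=> k; rewrite /eFF; case: (split k) => [i|j] r x y.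
    by rewrite he1 pairZ pairD scaler0 addr0.
  by rewrite he2 pairZ pairD scaler0 addr0.
move=> Z phi hphi.
have [[psi1 [hpsi1 pe1]] _] := u1 Z (fun i => phi (lshift m' i)) (fun i => hphi _).
have [[psi2 [hpsi2 pe2]] _] := u2 Z (fun j => phi (rshift m j)) (fun j => hphi _).
split.
  exists (fun z => psi1 z.1 + psi2 z.2); split.
    by apply: hom_add; [apply: (hom_comp (@hom_fst _ F F') hpsi1)|apply: (hom_comp (@hom_snd _ F F') hpsi2)].
  move=> k x; rewrite -(splitK k); case: (split k) => [i|j]; rewrite /eFF unsplitK /=.
    by rewrite pe1 (hom0 hpsi2) addr0.
  by rewrite pe2 (hom0 hpsi1) add0r.
move=> p1 p2 h1 h2 e1' e2' [x y].
have hl : forall p : (F * F')%type -> Z, hom p -> hom (fun x : F => p (x, 0)).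
  by move=> p hp r a b; rewrite -hp pairZ pairD scaler0 addr0.
have hr : forall p : (F * F')%type -> Z, hom p -> hom (fun x : F' => p (0, x)).
  by move=> p hp r a b; rewrite -hp pairZ pairD scaler0 addr0.
have [_ v1] := u1 Z (fun i => phi (lshift m' i)) (fun i => hphi _).
have [_ v2] := u2 Z (fun j => phi (rshift m j)) (fun j => hphi _).
have ex : p1 (x, 0) = p2 (x, 0).
  apply: (v1 _ _ (hl _ h1) (hl _ h2)) => i a.
    by rewrite -e1' /eFF split_l.
  by rewrite -e2' /eFF split_l.
have ey : p1 (0, y) = p2 (0, y).
  apply: (v2 _ _ (hr _ h1) (hr _ h2)) => j a.
    by rewrite -e1' /eFF split_r.
  by rewrite -e2' /eFF split_r.
have -> : ((x, y) : (F * F')%type) = (x, 0) + (0, y) by rewrite pairD addr0 add0r.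
by rewrite (homD h1) (homD h2) ex ey.
Qed.

Lemma fin_free_RR : fin_free 1 (RR R).
Proof.
exists (fun _ r => r); split; first by move=> _; apply: hom_id.
move=> Z phi hphi; split; first by exists (phi ord0); split => // i x; rewrite (ord1 i).
by move=> p1 p2 _ _ e1 e2 m; rewrite (e1 ord0) (e2 ord0).
Qed.

Lemma fin_free_pow n : fin_free n (Pow n (RR R)).
Proof. by exists (@dl _ n (RR R)); apply: dsum_pow. Qed.

Lemma fin_free_expand n F (e : 'I_n -> RR R -> F) : is_dsum e ->
  forall z, exists c : 'I_n -> RR R, z = \sum_l e l (c l).
Proof.
move=> [he univ] z.
have [[phi [hphi pe]] _] := univ _ (@dl _ n (RR R)) (fun i => dl_hom i).
have [_ u] := univ F e he.
exists (fun l => phi z l).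
apply: (u (fun z => z) (fun z => \sum_l e l (phi z l))) => //.
- by apply: hom_bigsum => l; apply: (hom_comp _ (he l)) => r x y; rewrite hphi !ffunE.
- move=> i x; rewrite pe (bigD1 i) //= ffunE eqxx big1 ?addr0 // => j /negbTE ji.
  by rewrite ffunE ji hom0.
Qed.

Definition cyc X (x : X) : closedP X.
Proof.
refine (@mkCP _ X (fun z => exists r : R^c, z = r *: x) _ _ _).
- by exists 0; rewrite scale0r.
- by move=> a b [r ->] [s ->]; exists (r + s); rewrite scalerDl.
- by move=> r a [s ->]; exists (r * s); rewrite scalerA.
Defined.

Lemma fp_zero : fin_pres (Pow 0 (RR R)).
Proof.
exists 0%N, 0%N, (Pow 0 (RR R)), (Pow 0 (RR R)), (fun x => x), (fun x => x).
split; try exact: fin_free_pow; try exact: hom_id.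
split; first by move=> y; exists y.
by move=> x; split => _; [exists x | apply: zero_pow0].
Qed.

Lemma fp_pair A B : fin_pres A -> fin_pres B -> fin_pres (A * B)%type.
Proof.
move=> [m [n [F1 [F0 [f [g [ff1 ff0 hf hg [gs ex]]]]]]]].
move=> [m' [n' [F1' [F0' [f' [g' [ff1' ff0' hf' hg' [gs' ex']]]]]]]].
exists (m + m')%N, (n + n')%N, (F1 * F1')%type, (F0 * F0')%type,
  (fun z => (f z.1, f' z.2)), (fun z => (g z.1, g' z.2)).
split; try exact: fin_free_pair.
- by move=> r x y; rewrite hf hf'.
- by move=> r x y; rewrite hg hg'.
split.
  by move=> [c c']; have [b hb] := gs c; have [b' hb'] := gs' c'; exists (b, b'); rewrite hb hb'.
move=> [b b']; split.
  move=> e; have /= e1 := congr1 fst e; have /= e2 := congr1 snd e.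
  have [a ->] := (ex _).1 e1; have [a' ->] := (ex' _).1 e2.
  by exists (a, a').
case=> [[a a']] [-> ->]; apply: pair_ext => /=.
  by apply/(ex _).2; exists a.
by apply/(ex' _).2; exists a'.
Qed.

Lemma fp_quot D (x : D) : fin_pres D -> fin_pres (quoM (cyc x)).
Proof.
move=> [m [n [F1 [F0 [f [g [ff1 ff0 hf hg [gs ex]]]]]]]].
have [y0 hy0] := gs x.
exists (m + 1)%N, n, (F1 * RR R)%type, F0,
  (fun z => f z.1 + (z.2 : R^c) *: y0), (fun w => qpi (cyc x) (g w)).
split => //.
- by apply: fin_free_pair => //; apply: fin_free_RR.
- move=> r a b; rewrite hf.
  have -> : ((r *: a + b).2 : R^c) = r * (a.2 : R^c) + (b.2 : R^c) by [].
  by rewrite scalerDl -scalerA scalerDr addrACA.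
- exact: hom_comp (qpi_hom (cyc x)).
split.
  by move=> c; have [d <-] := qpi_surj c; have [w <-] := gs d; exists w.
move=> w; split.
  move/qpi0 => [r hr].
  have : g (w - (r *: y0)) = 0 by rewrite (homB hg) (homZ hg) hy0 hr subrr.
  case/(ex _).1 => z hz; exists (z, r) => /=.
  by rewrite -hz subrK.
case=> [[z r]] -> /=; apply/qpi0; exists r.
have gz : g (f z) = 0 by apply/(ex _).2; exists z.
by rewrite (homD hg) (homZ hg) hy0 gz add0r.
Qed.

End FP.

Unset Implicit Arguments.
Section ProdF.
Variable R : pzRingType.
Variables (K : Type) (N : K -> rmod R).
Fixpoint prodF (l : seq K) : rmod R :=
  match l with [::] => Pow 0 (RR R) | k :: l' => (N k * prodF l')%type end.

Lemma fp_prodF : (forall k, fin_pres (N k)) -> forall l, fin_pres (prodF l).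
Proof. by move=> h; elim=> [|k l IH] /=; [apply: fp_zero | apply: fp_pair]. Qed.
Lemma pd_prodF : (forall k, pd_le1 (N k)) -> forall l, pd_le1 (prodF l).
Proof. by move=> h; elim=> [|k l IH] /=; [apply: pd_zero | apply: pd_pair]. Qed.

Variables (C0 : rmod R) (e : forall k, N k -> C0) (p : forall k, C0 -> N k).
Hypotheses (he : forall k, hom (e k)) (hp : forall k, hom (p k))
  (pe : forall k x, p k (e k x) = x) (pe0 : forall j k x, j <> k -> p k (e j x) = 0).

Fixpoint tau (l : seq K) : prodF l -> C0 :=
  match l return prodF l -> C0 with
  | [::] => fun _ => 0
  | k :: l' => fun z => e k z.1 + tau l' z.2 end.
Fixpoint rho (l : seq K) : C0 -> prodF l :=
  match l return C0 -> prodF l with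
  | [::] => fun _ => 0
  | k :: l' => fun c => (p k c, rho l' c) end.

Lemma tau_hom l : hom (tau l).
Proof.
elim: l => [|k l IH] /=; first exact: hom_zero.
apply: hom_add; first exact: (hom_comp (@hom_fst _ _ _) (he k)).
exact: (hom_comp (@hom_snd _ _ _) IH).
Qed.
Lemma rho_hom l : hom (rho l).
Proof.
elim: l => [|k l IH] /=; first exact: hom_zero.
by move=> r x y; rewrite hp IH.
Qed.
Lemma rho_e0 l k x : ~ List.In k l -> rho l (e k x) = 0.
Proof.
elim: l => [|j l IH] /= hk; first by [].
rewrite pe0; last by move=> E; apply: hk; left.
by rewrite IH // => H; apply: hk; right.
Qed.
Lemma p_tau0 l k z : ~ List.In k l -> p k (tau l z) = 0.
Proof.
elim: l z => [|j l IH] z /= hk; first exact: hom0.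
rewrite (homD (hp k)) pe0; last by move=> E; apply: hk; left.
by rewrite IH ?add0r // => H; apply: hk; right.
Qed.
Lemma rho_tau l : List.NoDup l -> forall z, rho l (tau l z) = z.
Proof.
elim: l => [|k l IH] /= nd z; first by rewrite [z]zero_pow0.
inversion nd as [|k' l' nk nd' E]; subst.
case: z => a z /=.
rewrite (homD (hp k)) pe p_tau0 // addr0 (homD (rho_hom l)) rho_e0 // add0r IH //.
Qed.
Lemma tau_rho_e l : List.NoDup l -> forall k x, List.In k l -> tau l (rho l (e k x)) = e k x.
Proof.
elim: l => [|j l IH] /= nd k x; first by [].
inversion nd as [|k' l' nk nd' E]; subst.
case=> [E|H].
  by subst; rewrite pe rho_e0 // (hom0 (tau_hom l)) addr0.
rewrite pe0; last by move=> E; subst.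
by rewrite (hom0 (he j)) add0r IH.
Qed.
End ProdF.
Set Implicit Arguments.

Section QuotSummand.
Variable R : pzRingType.
Implicit Types M N X Y E A B C U V K Q P D W Z F T : rmod R.

Lemma summand_quot_cyc D C (t : D -> C) (r : C -> D) (x : D) :
  hom t -> hom r -> (forall d, r (t d) = d) ->
  summand (quoM (cyc x)) (quoM (cyc (t x))).
Proof.
move=> ht hr rt.
have [tb [htb tbE]] : exists tb : quoM (cyc x) -> quoM (cyc (t x)), hom tb /\ forall d, tb (qpi _ d) = qpi _ (t d).
  apply: qlift; first exact: hom_comp (qpi_hom _).
  by move=> d [s ->]; apply/qpi0; exists s; rewrite (homZ ht).
have [rb [hrb rbE]] : exists rb : quoM (cyc (t x)) -> quoM (cyc x), hom rb /\ forall c, rb (qpi _ c) = qpi _ (r c).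
  apply: qlift; first exact: hom_comp (qpi_hom _).
  by move=> c [s ->]; apply/qpi0; exists s; rewrite (homZ hr) rt.
exists tb, rb; split => // a; have [d <-] := qpi_surj a.
by rewrite tbE rbE rt.
Qed.

Lemma quot_summand T0 T1 C0 (f : RR R -> T0) (g : T0 -> T1) (i0 : T0 -> C0) (p0 : C0 -> T0) :
  ses f g -> hom i0 -> hom p0 -> (forall t, p0 (i0 t) = t) ->
  summand (quoM (cyc (i0 (f 1)))) (T1 * C0)%type.
Proof.
move=> sfg hi hp pi; have [hf hg fi gs ex] := sfg.
pose x := i0 (f 1).
have kerg : forall t, g t = 0 -> exists s : R^c, i0 t = s *: x.
  move=> t /(ex _).1 [a ->]; exists (a : R^c).
  by rewrite /x -(homZ hi) -(homZ hf) -RR_scale1.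
pose jj : C0 -> (T1 * C0)%type := fun c => (g (p0 c), c - i0 (p0 c)).
have hjj : hom jj.
  by move=> r a b; rewrite /jj pairZ pairD hp hg hi scalerBr addrACA opprD.
have [j [hj jE]] : exists j : quoM (cyc x) -> (T1 * C0)%type, hom j /\ forall c, j (qpi _ c) = jj c.
  apply: qlift => // c [s ->].
  rewrite /jj /x (homZ hp) pi (homZ hg) (homZ hi).
  have -> : g (f 1) = 0 by apply/(ex _).2; exists 1.
  by rewrite scaler0 subrr.
have [sg hsg] := fchoice gs.
pose h : (T1 * C0)%type -> C0 := fun z => i0 (sg z.1) + (z.2 - i0 (p0 z.2)).
exists j, (fun z => qpi (cyc x) (h z)); split => //.
  have e1 : (fun z : (T1 * C0)%type => qpi (cyc x) (h z)) =
     (fun z => qpi (cyc x) (i0 (sg z.1)) + qpi (cyc x) (z.2 - i0 (p0 z.2))).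
    by apply: functional_extensionality => z; rewrite -(homD (qpi_hom _)).
  rewrite e1; apply: hom_add.
    move=> r a b; rewrite -(qpi_hom (cyc x)); apply/qpi_eq.
    have ker : g (sg (r *: a.1 + b.1) - (r *: sg a.1 + sg b.1)) = 0.
      by rewrite (homB hg) hg !hsg subrr.
    have [s hs] := kerg _ ker; exists s; rewrite -hs.
    by rewrite (homB hi) hi fstD fstZ.
  exact: (hom_comp (@hom_snd _ T1 C0) (hom_comp (hom_sub (@hom_id _ C0) (hom_comp hp hi)) (qpi_hom (cyc x)))).
move=> a; have [c <-] := qpi_surj a; rewrite jE /jj; apply/qpi_eq.
have ker : g (sg (g (p0 c)) - p0 c) = 0 by rewrite (homB hg) hsg subrr.
have [s hs] := kerg _ ker; exists s; rewrite -hs /h /=.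
rewrite (homB hp) pi subrr (hom0 hi) subr0 (homB hi).
by rewrite addrCA [LHS]addrC addKr.
Qed.
End QuotSummand.

Section Crit.
Variable R : pzRingType.
Implicit Types M N X Y E A B C U V K Q P D W Z F T : rmod R.

Lemma ext_zero_target X : Ext1_zero X (Pow 0 (RR R)).
Proof.
move=> E f g [hf hg fi gs ex].
have gi : injective g.
  move=> a b e; apply/eqP; rewrite -subr_eq0; apply/eqP.
  have /(ex _).1 [z ->] : g (a - b) = 0 by rewrite (homB hg) e subrr.
  by rewrite [z]zero_pow0 hom0.
have [s hs] := fchoice gs.
exists s; split => // r x y; apply: gi; by rewrite hg !hs.
Qed.

Lemma pdk N : pd_le1 N -> forall K Q (f : K -> Q) (g : Q -> N), ses f g -> projective Q -> projective K.
Proof.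
move=> [Q1 [Q0 [fq [gq [p1 [p0 sq]]]]]] K Q f g sfg pQ.
exact: (schanuel sfg sq pQ p0 p1).
Qed.

Lemma ext_pair2 N Y1 Y2 : pd_le1 N -> Ext1_zero N Y1 -> Ext1_zero N Y2 -> Ext1_zero N (Y1 * Y2)%type.
Proof.
move=> [Q1 [Q0 [fq [gq [p1 [p0 sq]]]]]] e1 e2.
apply: (crit sq p0) => h hh.
have [h1 [hh1 h1e]] := pushout_ext sq e1 (hom_comp hh (@hom_fst _ Y1 Y2)).
have [h2 [hh2 h2e]] := pushout_ext sq e2 (hom_comp hh (@hom_snd _ Y1 Y2)).
exists (fun q => (h1 q, h2 q)); split; first exact: hom_pair.
by move=> k; rewrite h1e h2e; case: (h k).
Qed.

Definition good N M (y : M) := exists (Y : rmod R) (Phi : Y -> M) (z : Y),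
  [/\ hom Phi, Ext1_zero N Y & Phi z = y].

Lemma good_0 N M : good N (0 : M).
Proof.
exists (Pow 0 (RR R)), (fun _ => 0), 0; split => //; first exact: hom_zero.
exact: ext_zero_target.
Qed.

Lemma good_add N M (y1 y2 : M) : pd_le1 N -> good N y1 -> good N y2 -> good N (y1 + y2).
Proof.
move=> pN [Y1 [P1 [z1 [h1 e1 <-]]]] [Y2 [P2 [z2 [h2 e2 <-]]]].
exists (Y1 * Y2)%type, (fun w => P1 w.1 + P2 w.2), (z1, z2); split => //.
  by apply: hom_add; [apply: (hom_comp (@hom_fst _ Y1 Y2) h1)|apply: (hom_comp (@hom_snd _ Y1 Y2) h2)].
exact: ext_pair2.
Qed.

Lemma good_sum N M I (s : seq I) (F : I -> M) : pd_le1 N -> (forall i, good N (F i)) ->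
  good N (\sum_(i <- s) F i).
Proof.
move=> pN hF; elim: s => [|a s IH]; first by rewrite big_nil; apply: good_0.
by rewrite big_cons; apply: good_add.
Qed.

Lemma goodL N M (s : seq M) : pd_le1 N -> (forall y : M, good N y) ->
  exists (Y : rmod R) (Phi : Y -> M), [/\ hom Phi, Ext1_zero N Y &
     forall y, y \in s -> exists z, Phi z = y].
Proof.
move=> pN hg; elim: s => [|a s [Y [Phi [hP eY hit]]]].
  exists (Pow 0 (RR R)), (fun _ => 0); split => //; first exact: hom_zero.
  exact: ext_zero_target.
have [Y1 [P1 [z1 [h1 e1 E1]]]] := hg a.
exists (Y1 * Y)%type, (fun w => P1 w.1 + Phi w.2); split.
- by apply: hom_add; [apply: (hom_comp (@hom_fst _ Y1 Y) h1)|apply: (hom_comp (@hom_snd _ Y1 Y) hP)].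
- exact: ext_pair2.
- move=> y; rewrite inE => /orP [/eqP ->|/hit [z <-]].
    by exists (z1, 0); rewrite /= (hom0 hP) addr0.
  by exists (0, z); rewrite /= (hom0 h1) add0r.
Qed.

Lemma fp_crit N M : fin_pres N -> pd_le1 N -> (forall y : M, good N y) -> Ext1_zero N M.
Proof.
move=> [m [n [F1 [F0 [f [g [[e1 de1] ff0 hf hg [gs ex]]]]]]]] pN hgood.
have he1 : forall l, hom (e1 l) by case: de1.
pose PK : F0 -> Prop := fun w => g w = 0.
have PK0 : PK 0 by rewrite /PK hom0.
have PKD : forall x y, PK x -> PK y -> PK (x + y).
  by move=> x y; rewrite /PK (homD hg) => -> ->; rewrite addr0.
have PKZ : forall (r : R^c) x, PK x -> PK (r *: x).
  by move=> r x; rewrite /PK (homZ hg) => ->; rewrite scaler0.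
pose SK := mkCP PK0 PKD PKZ. pose K := subM SK.
have sK : ses (fun k : K => val k) g.
  split => //.
  - by move=> x y; apply: val_inj.
  - move=> w; split; first by move=> h; exists (mkS SK h).
    by case=> k ->; exact: (sub_mem k).
have pF0 : projective F0 by apply: proj_fin_free ff0.
have pK : projective K by apply: (pdk pN sK pF0).
apply: (crit sK pF0) => h hh.
have Pk : forall l, PK (f (e1 l 1)) by move=> l; apply/(ex _).2; eexists.
pose kk l : K := mkS SK (Pk l).
have [Y [Phi [hPhi eY hit]]] := goodL [seq h (kk l) | l <- enum 'I_m] pN hgood.
have : forall l, exists z, Phi z = h (kk l).
  by move=> l; apply: hit; apply: map_f; rewrite mem_enum.
case/fchoice => zz hzz.
have claim : forall k : K, exists y, Phi y = h k.
  move=> k; have /(ex _).1 [z hz] : g (val k) = 0 := sub_mem k.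
  have [c hc] := fin_free_expand de1 z.
  have -> : k = \sum_l (c l : R^c) *: kk l.
    apply: val_inj; rewrite (hom_sum _ _ (@val_hom _ _ SK)) hz hc (hom_sum _ _ hf).
    apply: eq_bigr => l _; rewrite [c l]RR_scale1 (homZ (he1 l)) (homZ hf) /=.
    by congr (_ *: _); rewrite /GRing.scale /= mulr1.
  exists (\sum_l (c l : R^c) *: zz l).
  rewrite (hom_sum _ _ hPhi) (hom_sum _ _ hh); apply: eq_bigr => l _.
  by rewrite (homZ hPhi) (homZ hh) hzz.
pose PI : M -> Prop := fun x => exists y, Phi y = x.
have PI0 : PI 0 by exists 0; rewrite hom0.
have PID : forall x y, PI x -> PI y -> PI (x + y).
  by move=> x y [a <-] [b <-]; exists (a + b); rewrite (homD hPhi).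
have PIZ : forall (r : R^c) x, PI x -> PI (r *: x).
  by move=> r x [a <-]; exists (r *: a); rewrite (homZ hPhi).
pose SI := mkCP PI0 PID PIZ.
pose h' : K -> subM SI := fun k => mkS SI (claim k).
have hh' : hom h' by move=> r x y; apply: val_inj => /=; rewrite hh.
have PIy : forall y, PI (Phi y) by move=> y; exists y.
pose Phi' : Y -> subM SI := fun y => mkS SI (PIy y).
have hPhi' : hom Phi' by move=> r x y; apply: val_inj => /=; rewrite hPhi.
have Phis : forall w : subM SI, exists y, Phi' y = w.
  move=> w; have [y hy] : PI (val w) := sub_mem w.
  by exists y; apply: val_inj.
have [lam [hlam elam]] := pK _ _ Phi' h' hPhi' hh' Phis.
have [lam' [hlam' elam']] := pushout_ext sK eY hlam.
exists (fun w => Phi (lam' w)); split; first exact: hom_comp.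
by move=> k; rewrite elam'; have := congr1 val (elam k).
Qed.

End Crit.

Section Main.
Variable R : pzRingType.
Implicit Types M N X Y E A B C U V K Q P D W Z F T : rmod R.

Lemma ext_copies T C M : copies T C -> Ext1_zero T M -> Ext1_zero C M.
Proof. by case=> I [e he] hT; apply: (ext_dsum1 he) => _. Qed.

Lemma ses_cyc D (x : D) : (forall r s : R^c, r *: x = s *: x -> r = s) ->
  ses (fun r : RR R => (r : R^c) *: x) (qpi (cyc x)).
Proof.
move=> inj; split.
- move=> a r s; rewrite scalerDl -scalerA.
  by [].
- exact: qpi_hom.
- by move=> r s /inj.
- exact: qpi_surj.
- by move=> z; split; [move/qpi0 => [r ->]; exists r | case=> r ->; apply/qpi0; exists r].
Qed.

Theorem main_thm :
  (forall P : rmod R, pure_projective P -> dsum_fin_pres P) ->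
  forall T : rmod R, pure_projective T -> tilting1 T -> classical T.
Proof.
move=> hyp T ppT tT.
have [I [N [eT [fpN dT]]]] := hyp T ppT.
have [pdT extC [T0 [T1 [f [g [aT0 aT1 sfg]]]]]] := tT.
have [C0 [cp0 [i0 [p0 [hi0 hp0 pi0]]]]] := aT0.
have [C1 [cp1 sT1C1]] := aT1.
have [hf hg fi gs ex] := sfg.
have [l0 [e0 d0]] := cp0.
pose Kt := {_ : l0 & I}.
pose NK := fun k : Kt => N (projT2 k).
pose eK := fun (k : Kt) (x : NK k) => e0 (projT1 k) (eT (projT2 k) x).
have dK : @is_dsum R Kt NK C0 eK.
  exact: (@dsum_comp R l0 (fun _ => I) (fun _ => T) C0 e0 (fun _ i => N i) (fun _ => eT) d0 (fun _ => dT)).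
have heK : forall k, hom (eK k) by case: dK.
have Hp : forall k : Kt, exists p : C0 -> NK k, [/\ hom p, forall x, p (eK k x) = x &
     forall j x, j <> k -> p (eK j x) = 0].
  by move=> k; apply: dsum_proj.
have [pK hpK] := dfchoice Hp.
have hpKh : forall k, hom (pK k) by move=> k; case: (hpK k).
have pKe : forall k x, pK k (eK k x) = x by move=> k; case: (hpK k).
have pKe0 : forall j k x, j <> k -> pK k (eK j x) = 0 by move=> j k x jk; case: (hpK k) => _ _; apply.
pose x' := i0 (f 1).
have [L hL] := dsum_fin dK x'.
have dec : forall a b : Kt, {a = b} + {a <> b} by move=> a b; apply: excluded_middle_informative.
pose l := List.nodup dec (List.map (@projT1 _ _) L).
have nd : List.NoDup l by apply: List.NoDup_nodup.
pose D := prodF R Kt NK l.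
pose tau' := tau R Kt NK C0 eK l.
pose rho' := rho R Kt NK C0 pK l.
have htau : hom tau' by apply: tau_hom.
have hrho : hom rho' by apply: rho_hom.
have rt : forall z, rho' (tau' z) = z by apply: rho_tau.
have tre : forall k x, List.In k l -> tau' (rho' (eK k x)) = eK k x by move=> k x; apply: tau_rho_e.
pose xt := rho' x'.
have gen : forall L' : seq {k : Kt & NK k}, (forall y, List.In y L' -> List.In (projT1 y) l) ->
  \sum_(y <- L') tau' (rho' (eK (projT1 y) (projT2 y))) = \sum_(y <- L') eK (projT1 y) (projT2 y).
  elim=> [|y L' IH] hin; first by rewrite !big_nil.
  rewrite !big_cons tre; last by apply: hin; left.
  by rewrite IH // => z hz; apply: hin; right.
have txt : tau' xt = x'.
  rewrite /xt hL (hom_sum _ _ hrho) (hom_sum _ _ htau); apply: gen.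
  by move=> y hy; apply/List.nodup_In; apply: List.in_map.
have pdN : forall i, pd_le1 (N i) by move=> i; apply: (pd_summand (dsum_summand i dT) pdT).
have pdD : pd_le1 D by apply: pd_prodF => k; apply: pdN.
have fpD : fin_pres D by apply: fp_prodF => k; apply: fpN.
have injx : forall r s : R^c, r *: xt = s *: xt -> r = s.
  move=> r s e; have := congr1 (fun z => p0 (tau' z)) e.
  rewrite /= !(homZ htau) txt !(homZ hp0) /x' pi0.
  rewrite -!(homZ hf) => /fi.
  by rewrite /GRing.scale /= !mulr1.
have sesD := ses_cyc injx.
pose Dq := quoM (cyc xt).
pose fD := fun r : RR R => (r : R^c) *: xt.
pose U := (D * Dq)%type.
have fpU : fin_pres U by apply: fp_pair => //; apply: fp_quot.
have sumD : summand D C0 by exists tau', rho'.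
have sumDq : summand Dq (C1 * C0)%type.
  have s1 := summand_quot_cyc xt htau hrho rt.
  rewrite txt in s1.
  have s2 := quot_summand sfg hi0 hp0 pi0.
  have s3 := summand_pair sT1C1 (summand_refl C0).
  exact: (summand_trans s1 (summand_trans s2 s3)).
pose W := (C0 * (C1 * C0))%type.
have cpW : copies T W by apply: copies_pair => //; apply: copies_pair.
have sumU : summand U W by apply: summand_pair.
have ExtN : forall i Y, Ext1_zero T Y -> Ext1_zero (N i) Y.
  by move=> i Y; apply: ext_summand1; apply: (dsum_summand i dT).
have dir1 : forall M, Ext1_zero T M -> Ext1_zero U M.
  move=> M h; apply: (ext_summand1 sumU).
  by apply: ext_pair1; [|apply: ext_pair1]; apply: ext_copies h.
have dir2 : forall M, Ext1_zero U M -> Ext1_zero T M.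
  move=> M hU.
  have hDq : Ext1_zero Dq M := ext_summand1 (summand_snd D Dq) hU.
  apply: (ext_dsum1 dT) => i; apply: (fp_crit (fpN i) (pdN i)) => y.
  have hy : hom (fun r : RR R => (r : R^c) *: y).
    move=> a r s; rewrite scalerDl -scalerA.
    by [].
  have [phi [hphi phie]] := pushout_ext sesD hDq hy.
  exists D, phi, xt; split => //.
    by apply: ExtN; apply: (ext_summand2 sumD); apply: extC.
  by have := phie 1; rewrite !scale1r.
exists U; split => //.
  split.
  - by apply: pd_pair => //; apply: (pd_extR sesD).
  - move=> X [J [eX dX]]; apply: dir1.
    apply: (ext_dsum1 dT) => i; apply: (fp_crit (fpN i) (pdN i)) => y.
    have [L' ->] := dsum_fin dX y; apply: good_sum (pdN i) _ => z.
    exists U, (eX (projT1 z)), (projT2 z); split => //.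
      by case: dX.
    by apply: ExtN; apply: (ext_summand2 sumU); apply: extC.
  - exists D, Dq, fD, (qpi (cyc xt)); split => //; apply: in_Add_summand.
      exact: summand_fst.
    exact: summand_snd.
by move=> M; split; [apply: dir1 | apply: dir2].
Qed.

End Main.


Theorem corollary2p8 (R : pzRingType) :
  (forall P : rmod R, pure_projective P -> dsum_fin_pres P) ->
  forall T : rmod R, pure_projective T -> tilting1 T -> classical T.
Proof. exact: (@main_thm R). Qed.
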